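(* Let $\Gamma$ be a finitely generated discrete group with finite symmetric generating set $Q$ and let $Z\subseteq\mathrm{Sub}(\Gamma)$ be a uniformly recurrent subgroup. The map $q:Z\rtimes\Gamma\to\mathcal{G}$, $q(L,\gamma)=(L,\gamma L)$ for $L\in Z$, $\gamma\in\Gamma$, is a continuous, open and surjective groupoid homomorphism. In particular, $\mathcal{G}$ is a quotient of the transformation groupoid $Z\rtimes\Gamma$.
   Context: Word length $l(\gamma)$ is taken with respect to $Q$. $\mathrm{Sub}(\Gamma)$ is the space of subgroups of $\Gamma$ with the topology of pointwise convergence of indicator functions, with $\Gamma$ acting by conjugation $\gamma.L=\gamma L\gamma^{-1}$. A uniformly recurrent subgroup (URS) is a nonempty closed $\Gamma$-invariant subset $Z\subseteq\mathrm{Sub}(\Gamma)$ on which every $\Gamma$-orbit is dense. For $L\le\Gamma$, the Schreier graph $S(L)$ is the rooted labeled graph with vertex set $\Gamma/L$, root $L$, and for each $\gamma L$ and $q\in Q$ an edge from $\gamma L$ to $q\gamma L$ labeled $q$; $B_N(S(L),L)$ is the ball of radius $N$ (path metric) around the root. Root-label isomorphism means graph isomorphism preserving roots and labels. Transformation groupoid $Z\rtimes\Gamma$: the space $Z\times\Gamma$ with product topology ($\Gamma$ discrete), $r(L,\gamma)=L$, $s(L,\gamma)=\gamma L\gamma^{-1}$, product $(L,\gamma)(\gamma L\gamma^{-1},\eta)=(L,\eta\gamma)$. The groupoid $\mathcal{G}$: as a set, $\mathcal{G}=\{(L,c): L\in Z,\ c\in\Gamma/L\}$, with $r(L,\gamma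 L)=L$, $s(L,\gamma L)=\gamma L\gamma^{-1}$, product $(L,\gamma L)(\gamma L\gamma^{-1},\eta\gamma L\gamma^{-1})=(L,\eta\gamma L)$, inverse $(L,\gamma L)^{-1}=(\gamma L\gamma^{-1},\gamma^{-1}\cdot\gamma L\gamma^{-1})$, and units $(L,L)$. Its topology has as basis the sets $U_{L,N,\gamma}=\{(L',\gamma L'): L'\in Z,\ (B_N(S(L'),L'),L')\text{ root-label isomorphic to }(B_N(S(L),L),L)\}$ for $L\in Z$, $N\in\mathbb{N}$, $\gamma\in\Gamma$ with $l(\gamma)\le N$. *)

(* Defs.v *)
(* Abstract (possibly infinite) discrete group given as a record
   with its axioms; subgroups are predicates Gamma -> Prop; cosets and
   Schreier-graph vertices are predicates, compared by Leibniz equality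
   (extensionality axioms are whitelisted). *)
From Stdlib Require Import List Arith.
Import ListNotations.

Record group := Group {
  carrier :> Type;
  mul : carrier -> carrier -> carrier;
  inv : carrier -> carrier;
  one : carrier;
  mulA : forall x y z, mul x (mul y z) = mul (mul x y) z;
  mul1g : forall x, mul one x = x;
  mulg1 : forall x, mul x one = x;
  mulVg : forall x, mul (inv x) x = one;
  mulgV : forall x, mul x (inv x) = one
}.

Arguments mul {g}.
Arguments inv {g}.
Arguments one {g}.

Section Defs.
Context {Gam : group}.

Definition gset := Gam -> Prop.

Definition is_subgroup (L : gset) : Prop :=
  L one /\ (forall x y, L x -> L y -> L (mul x y)) /\ (forall x, L x -> L (inv x)).

Definition conj (g : Gam) (L : gset) : gset := fun x => L (mul (mul (inv g) x) g).

Definition coset (g : Gam) (L : gset) : gset := fun x => exists l, L l /\ x = mul g l.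

Definition word_prod (w : list Gam) : Gam := fold_right mul one w.

Definition symmetric_set (Q : list Gam) : Prop := forall q, In q Q -> In (inv q) Q.

Definition generates (Q : list Gam) : Prop :=
  forall g, exists w, (forall q, In q w -> In q Q) /\ g = word_prod w.

Definition wordlen_le (Q : list Gam) (g : Gam) (N : nat) : Prop :=
  exists w, (forall q, In q w -> In q Q) /\ length w <= N /\ g = word_prod w.

Definition agree_on (F : list Gam) (L L' : gset) : Prop :=
  forall x, In x F -> (L x <-> L' x).

(* Z closed in Sub(Gamma) (pointwise convergence topology) *)
Definition closed_in_Sub (Z : gset -> Prop) : Prop :=
  forall L, is_subgroup L -> ~ Z L ->
    exists F, forall L', is_subgroup L' -> agree_on F L L' -> ~ Z L'.

Definition conj_invariant (Z : gset -> Prop) : Prop :=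
  forall g L, Z L -> Z (conj g L).

Definition orbits_dense (Z : gset -> Prop) : Prop :=
  forall L L0, Z L -> Z L0 -> forall F, exists g, agree_on F L0 (conj g L).

Definition is_URS (Z : gset -> Prop) : Prop :=
  (exists L, Z L) /\ (forall L, Z L -> is_subgroup L) /\ closed_in_Sub Z /\
  conj_invariant Z /\ orbits_dense Z.

Definition act (q : Gam) (C : gset) : gset := fun x => exists c, C c /\ x = mul q c.

Definition adjacent (Q : list Gam) (u v : gset) : Prop :=
  exists q, In q Q /\ (v = act q u \/ u = act q v).

Fixpoint in_ball (Q : list Gam) (L : gset) (n : nat) (v : gset) : Prop :=
  match n with
  | 0 => v = coset one L
  | S n' => in_ball Q L n' v \/ exists u, in_ball Q L n' u /\ adjacent Q u v
  end.

Definition ball_iso (Q : list Gam) (N : nat) (L L' : gset) : Prop :=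
  exists (phi psi : gset -> gset),
    (forall v, in_ball Q L N v -> in_ball Q L' N (phi v) /\ psi (phi v) = v) /\
    (forall v', in_ball Q L' N v' -> in_ball Q L N (psi v') /\ phi (psi v') = v') /\
    phi (coset one L) = coset one L' /\
    (forall u v q, in_ball Q L N u -> in_ball Q L N v -> In q Q ->
       (act q u = v <-> act q (phi u) = phi v)).

Definition inZG (Z : gset -> Prop) (x : gset * Gam) : Prop := Z (fst x).
Definition rZG (x : gset * Gam) : gset := fst x.
Definition sZG (x : gset * Gam) : gset := conj (snd x) (fst x).
Definition composableZG (x y : gset * Gam) : Prop := sZG x = fst y.
Definition prodZG (x y : gset * Gam) : gset * Gam := (fst x, mul (snd y) (snd x)).

Definition openZG (Z : gset -> Prop) (S : gset * Gam -> Prop) : Prop :=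
  (forall x, S x -> inZG Z x) /\
  (forall x, S x -> exists F, forall L', Z L' -> agree_on F (fst x) L' -> S (L', snd x)).

Definition inG (Z : gset -> Prop) (x : gset * gset) : Prop :=
  Z (fst x) /\ exists g, snd x = coset g (fst x).
Definition rG (x : gset * gset) : gset := fst x.
(* s(L, gL) = g L g^{-1}  (as a relation: independent of representative) *)
Definition sG_rel (x : gset * gset) (M : gset) : Prop :=
  exists g, snd x = coset g (fst x) /\ M = conj g (fst x).
Definition prodG_rel (x y z : gset * gset) : Prop :=
  exists L g h, x = (L, coset g L) /\ y = (conj g L, coset h (conj g L)) /\
                z = (L, coset (mul h g) L).

Definition basisG (Q : list Gam) (Z : gset -> Prop) (L0 : gset) (N : nat) (g : Gam)
    (x : gset * gset) : Prop :=
  Z (fst x) /\ snd x = coset g (fst x) /\ ball_iso Q N (fst x) L0.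

Definition openG (Q : list Gam) (Z : gset -> Prop) (S : gset * gset -> Prop) : Prop :=
  (forall x, S x -> inG Z x) /\
  (forall x, S x -> exists L0 N g, Z L0 /\ wordlen_le Q g N /\
      basisG Q Z L0 N g x /\ (forall y, basisG Q Z L0 N g y -> S y)).

Definition qmap (x : gset * Gam) : gset * gset := (fst x, coset (snd x) (fst x)).

Definition groupoid_hom_q (Z : gset -> Prop) : Prop :=
  (forall x, inZG Z x -> inG Z (qmap x)) /\
  (forall x, inZG Z x -> rG (qmap x) = rZG x /\ sG_rel (qmap x) (sZG x)) /\
  (forall x y, inZG Z x -> inZG Z y -> composableZG x y ->
     prodG_rel (qmap x) (qmap y) (qmap (prodZG x y))).

Definition continuous_q (Q : list Gam) (Z : gset -> Prop) : Prop :=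
  forall S, openG Q Z S -> openZG Z (fun x => inZG Z x /\ S (qmap x)).

Definition open_q (Q : list Gam) (Z : gset -> Prop) : Prop :=
  forall T, openZG Z T -> openG Q Z (fun y => exists x, T x /\ y = qmap x).

Definition surjective_q (Z : gset -> Prop) : Prop :=
  forall y, inG Z y -> exists x, inZG Z x /\ qmap x = y.

End Defs.

(* Main.v *)
Require Import Defs.
From Stdlib Require Import List Arith Lia FunctionalExtensionality PropExtensionality.
Import ListNotations.

Lemma pred_ext {G : group} (P R : @gset G) : (forall x, P x <-> R x) -> P = R.
Proof. intro H. apply functional_extensionality; intro x. apply propositional_extensionality. apply H. Qed.

Lemma inv_inv {G : group} (x : G) : inv (inv x) = x.
Proof.
  rewrite <- (mulg1 _ (inv (inv x))). rewrite <- (mulVg _ x), mulA, mulVg, mul1g. reflexivity.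
Qed.

Lemma inv_mul {G : group} (x y : G) : inv (mul x y) = mul (inv y) (inv x).
Proof.
  assert (H : mul (mul x y) (mul (inv y) (inv x)) = one).
  { rewrite <- mulA, (mulA _ y), mulgV, mul1g, mulgV. reflexivity. }
  rewrite <- (mulg1 _ (inv (mul x y))), <- H, mulA, mulVg, mul1g. reflexivity.
Qed.

Lemma inv_one {G : group} : @inv G one = one.
Proof. rewrite <- (mulg1 _ (inv one)). apply mulVg. Qed.

Lemma act_coset {G : group} (q g : G) (L : gset) : act q (coset g L) = coset (mul q g) L.
Proof.
  apply pred_ext; intro x; unfold act, coset; split.
  - intros [c [[l [Hl ->]] ->]]. exists l. split; auto. apply mulA.
  - intros [l [Hl ->]]. exists (mul g l). split; [exists l; auto | symmetry; apply mulA].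
Qed.

Lemma act_inv {G : group} (q : G) (v : gset) : act (inv q) (act q v) = v.
Proof.
  apply pred_ext; intro x; unfold act; split.
  - intros [c [[d [Hd ->]] ->]]. rewrite mulA, mulVg, mul1g. auto.
  - intros Hx. exists (mul q x). split; [exists x; auto|]. rewrite mulA, mulVg, mul1g; auto.
Qed.

Lemma coset_eq {G : group} (L : @gset G) (a b : G) : is_subgroup L ->
  (coset a L = coset b L <-> L (mul (inv b) a)).
Proof.
  intros [H1 [HM HI]]. split.
  - intro E. assert (Ha : coset a L a) by (exists one; split; auto; rewrite mulg1; auto).
    rewrite E in Ha. destruct Ha as [l [Hl Ea]]. rewrite Ea, mulA, mulVg, mul1g. auto.
  - intro Hl. apply pred_ext; intro x; unfold coset; split.
    + intros [l [Hl' ->]]. exists (mul (mul (inv b) a) l). split; auto.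
      rewrite !mulA, mulgV, mul1g. reflexivity.
    + intros [l [Hl' ->]]. exists (mul (inv (mul (inv b) a)) l). split; auto.
      rewrite inv_mul, inv_inv, !mulA, mulgV, mul1g. reflexivity.
Qed.

Definition overQ {G : group} (Q : list G) (w : list G) := forall q, In q w -> In q Q.

Lemma wp_app {G : group} (w1 w2 : list G) : word_prod (w1 ++ w2) = mul (word_prod w1) (word_prod w2).
Proof. induction w1; simpl. - rewrite mul1g; auto. - rewrite IHw1, mulA; auto. Qed.

Lemma wp_rev {G : group} (w : list G) : word_prod (rev (map inv w)) = inv (word_prod w).
Proof.
  induction w; simpl. - rewrite inv_one; auto.
  - rewrite wp_app, IHw, inv_mul. simpl. rewrite mulg1. auto.
Qed.

Lemma overQ_rev {G : group} (Q w : list G) : symmetric_set Q -> overQ Q w -> overQ Q (rev (map inv w)).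
Proof.
  intros HS Hw q Hq. apply in_rev in Hq. apply in_map_iff in Hq. destruct Hq as [x [<- Hx]].
  apply HS, Hw, Hx.
Qed.

Lemma in_ball_mono {G : group} (Q : list G) L n m v : n <= m -> in_ball Q L n v -> in_ball Q L m v.
Proof. induction 1; auto. intro Hb. left. auto. Qed.

Lemma in_ball_word {G : group} (Q : list G) L : forall w n, overQ Q w -> length w <= n ->
  in_ball Q L n (coset (word_prod w) L).
Proof.
  induction w as [|q w IH]; intros n Hw Hn.
  - apply (in_ball_mono _ _ 0); [lia|]. reflexivity.
  - destruct n as [|n]; simpl in Hn; [lia|]. right. exists (coset (word_prod w) L). split.
    + apply IH; [intros x Hx; apply Hw; simpl; auto | lia].
    + exists q. split; [apply Hw; simpl; auto|]. left. simpl. rewrite act_coset. auto.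
Qed.

Lemma ball_word {G : group} (Q : list G) L : symmetric_set Q -> forall n v, in_ball Q L n v ->
  exists w, overQ Q w /\ length w <= n /\ v = coset (word_prod w) L.
Proof.
  intros HS n. induction n as [|n IH]; intros v Hv; simpl in Hv.
  - exists []. split; [intros q []|]. simpl. auto.
  - destruct Hv as [Hv | [u [Hu [q [Hq [E|E]]]]]].
    + destruct (IH v Hv) as [w [? [? ?]]]. exists w. repeat split; auto.
    + destruct (IH u Hu) as [w [Hw [Hl ->]]]. exists (q :: w). split; [|split].
      * intros x [<-|Hx]; auto.
      * simpl; lia.
      * rewrite E, act_coset. auto.
    + destruct (IH u Hu) as [w [Hw [Hl Eu]]]. exists (inv q :: w). split; [|split].
      * intros x [<-|Hx]; auto.
      * simpl; lia.
      * rewrite <- (act_inv q v), <- E, Eu, act_coset. auto.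
Qed.

Lemma ball_iso_phi {G : group} (Q : list G) N A B phi psi :
  (forall v, in_ball Q A N v -> in_ball Q B N (phi v) /\ psi (phi v) = v) ->
  phi (coset one A) = coset one B ->
  (forall u v q, in_ball Q A N u -> in_ball Q A N v -> In q Q ->
       (act q u = v <-> act q (phi u) = phi v)) ->
  forall w, overQ Q w -> length w <= N -> phi (coset (word_prod w) A) = coset (word_prod w) B.
Proof.
  intros H1 H3 H4. induction w as [|q w IH]; intros Hw Hn; simpl.
  - auto.
  - assert (Hw' : overQ Q w) by (intros x Hx; apply Hw; simpl; auto).
    simpl in Hn. rewrite <- act_coset, <- act_coset.
    rewrite <- IH by (auto; lia). symmetry.
    apply (proj1 (H4 (coset (word_prod w) A) (act q (coset (word_prod w) A)) q ltac:(apply in_ball_word; auto; lia) ltac:(rewrite act_coset; apply (in_ball_word _ _ (q :: w)); auto) ltac:(apply Hw; simpl; auto))).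
    reflexivity.
Qed.

Lemma ball_iso_mem {G : group} (Q : list G) N A B : is_subgroup A -> is_subgroup B ->
  ball_iso Q N A B -> forall w, overQ Q w -> length w <= N ->
  (A (word_prod w) <-> B (word_prod w)).
Proof.
  intros HA HB [phi [psi [H1 [H2 [H3 H4]]]]] w Hw Hn.
  pose proof (ball_iso_phi Q N A B phi psi H1 H3 H4 w Hw Hn) as E.
  assert (R : forall (L : @gset G), is_subgroup L -> (L (word_prod w) <-> coset (word_prod w) L = coset one L)).
  { intros L HL. rewrite coset_eq by auto. rewrite inv_one, mul1g. tauto. }
  rewrite (R A HA), (R B HB). split.
  - intro EA. rewrite <- E, EA. auto.
  - intro EB. rewrite <- E, <- H3 in EB.
    assert (Hr : in_ball Q A N (coset one A)) by (apply (in_ball_word _ _ []); simpl; auto; [intros q []|lia]).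
    assert (Hv : in_ball Q A N (coset (word_prod w) A)) by (apply in_ball_word; auto).
    destruct (H1 _ Hr) as [_ Er]. destruct (H1 _ Hv) as [_ Ev].
    rewrite <- Ev, EB, Er. auto.
Qed.

Lemma ball_iso_refl {G : group} (Q : list G) N A : ball_iso Q N A A.
Proof.
  exists (fun v => v), (fun v => v). repeat split; auto; tauto.
Qed.

Lemma ball_iso_trans {G : group} (Q : list G) N A B C :
  ball_iso Q N A B -> ball_iso Q N B C -> ball_iso Q N A C.
Proof.
  intros [p1 [s1 [H1 [H2 [H3 H4]]]]] [p2 [s2 [K1 [K2 [K3 K4]]]]].
  exists (fun v => p2 (p1 v)), (fun v => s1 (s2 v)). split; [|split; [|split]].
  - intros v Hv. destruct (H1 v Hv) as [Hb E1]. destruct (K1 _ Hb) as [Hc E2].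
    split; auto. rewrite E2; auto.
  - intros v Hv. destruct (K2 v Hv) as [Hb E1]. destruct (H2 _ Hb) as [Hc E2].
    split; auto. rewrite E2; auto.
  - rewrite H3; auto.
  - intros u v q Hu Hv Hq. rewrite (H4 u v q Hu Hv Hq).
    apply K4; auto; [apply H1; auto | apply H1; auto].
Qed.

Definition Phi {G : group} (Q : list G) N (A B : gset) (v : gset) : gset :=
  fun x => exists w, overQ Q w /\ length w <= N /\ v = coset (word_prod w) A /\ coset (word_prod w) B x.

Definition agreeN {G : group} (Q : list G) M (A B : gset) :=
  forall w, overQ Q w -> length w <= M -> (A (word_prod w) <-> B (word_prod w)).

Lemma PhiE {G : group} (Q : list G) N A B : symmetric_set Q -> is_subgroup A -> is_subgroup B ->
  agreeN Q (N + N) A B -> forall w, overQ Q w -> length w <= N ->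
  Phi Q N A B (coset (word_prod w) A) = coset (word_prod w) B.
Proof.
  intros HS HA HB Hag w Hw Hn. apply pred_ext; intro x; split.
  - intros [w2 [Hw2 [Hn2 [E Hx]]]]. enough (E' : coset (word_prod w2) B = coset (word_prod w) B) by (rewrite <- E'; auto).
    symmetry. apply coset_eq in E; auto. apply coset_eq; auto.
    rewrite <- wp_rev, <- wp_app in *. apply (proj1 (Hag _ ltac:(intros q Hq; apply in_app_or in Hq; destruct Hq as [Hq|Hq]; [apply (overQ_rev Q w2 HS Hw2 q Hq)|apply Hw, Hq]) ltac:(rewrite length_app, length_rev, length_map; lia))).
    auto.
  - intro Hx. exists w. auto.
Qed.

Lemma agree_ball_iso {G : group} (Q : list G) N A B : symmetric_set Q -> is_subgroup A -> is_subgroup B ->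
  agreeN Q (S (N + N)) A B -> ball_iso Q N A B.
Proof.
  intros HS HA HB Hag.
  assert (Hag1 : agreeN Q (N + N) A B) by (intros w Hw Hn; apply Hag; auto).
  assert (Hag2 : agreeN Q (N + N) B A) by (intros w Hw Hn; symmetry; apply Hag; auto).
  exists (Phi Q N A B), (Phi Q N B A). split; [|split; [|split]].
  - intros v Hv. destruct (ball_word Q A HS N v Hv) as [w [Hw [Hn ->]]].
    rewrite PhiE by auto. split; [apply in_ball_word; auto|]. apply PhiE; auto.
  - intros v Hv. destruct (ball_word Q B HS N v Hv) as [w [Hw [Hn ->]]].
    rewrite PhiE by auto. split; [apply in_ball_word; auto|]. apply PhiE; auto.
  - apply (PhiE Q N A B HS HA HB Hag1 []); [intros q []|simpl; lia].
  - intros u v q Hu Hv Hq.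
    destruct (ball_word Q A HS N u Hu) as [wu [Hwu [Hnu ->]]].
    destruct (ball_word Q A HS N v Hv) as [wv [Hwv [Hnv ->]]].
    rewrite !PhiE by auto. rewrite !act_coset, !coset_eq by auto.
    change (mul q (word_prod wu)) with (word_prod (q :: wu)).
    rewrite <- wp_rev, <- wp_app. apply Hag.
    + intros x Hx. apply in_app_or in Hx. destruct Hx as [Hx|[<-|Hx]]; [apply (overQ_rev Q wv HS Hwv x Hx)|auto|apply Hwu, Hx].
    + rewrite length_app, length_rev, length_map. simpl. lia.
Qed.

Fixpoint words {G : group} (Q : list G) (n : nat) : list (list G) :=
  match n with
  | 0 => [[]]
  | S n => [] :: flat_map (fun q => map (cons q) (words Q n)) Q
  end.

Lemma words_complete {G : group} (Q : list G) : forall n w, overQ Q w -> length w <= n -> In w (words Q n).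
Proof.
  induction n as [|n IH]; intros w Hw Hn.
  - destruct w; simpl in *; [auto|lia].
  - destruct w as [|q w]; simpl; [auto|]. right. apply in_flat_map. exists q. split.
    + apply Hw; simpl; auto.
    + apply in_map. apply IH; [intros x Hx; apply Hw; simpl; auto | simpl in Hn; lia].
Qed.

Lemma agree_from_list {G : group} (Q : list G) M (A B : gset) F :
  incl (map word_prod (words Q M)) F -> agree_on F A B -> agreeN Q M A B.
Proof.
  intros Hi Ha w Hw Hn. apply Ha, Hi, in_map, words_complete; auto.
Qed.

Lemma bound_words {G : group} (Q : list G) : generates Q -> forall F : list G,
  exists N, forall f, In f F -> exists w, overQ Q w /\ length w <= N /\ f = word_prod w.
Proof.
  intros Hg F. induction F as [|f F [N IH]].
  - exists 0. intros f [].
  - destruct (Hg f) as [w [Hw Ef]]. exists (max N (length w)). intros x [<-|Hx].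
    + exists w. repeat split; auto; lia.
    + destruct (IH x Hx) as [w' [? [? ?]]]. exists w'. repeat split; auto; lia.
Qed.

Theorem proposition4p1 (Gam : group) (Q : list Gam) (Z : @gset Gam -> Prop) :
  symmetric_set Q -> generates Q -> is_URS Z ->
  continuous_q Q Z /\ open_q Q Z /\ surjective_q Z /\ groupoid_hom_q Z.
Proof.
  intros HS HG [_ [Hsub _]]. split; [|split; [|split]].
  -
    intros Sx [HS1 HS2]. split; [intros x [Hx _]; auto|].
    intros [L g0] [HL Hx]. destruct (HS2 _ Hx) as [L0 [N [g [HL0 [Hwl [[_ [Ec Hbi]] Hall]]]]]].
    simpl in *. exists (mul (inv g) g0 :: map word_prod (words Q (S (N + N)))).
    intros L' HL' Hag. split; [exact HL'|]. apply Hall. unfold basisG; simpl.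
    split; [auto|split].
    + apply coset_eq; auto. apply coset_eq in Ec; auto. apply Hag; simpl; auto.
    + apply (ball_iso_trans _ _ _ L); auto.
      apply agree_ball_iso; auto. intros w Hw Hn. symmetry.
      apply (agree_from_list Q (S (N + N)) L L' (mul (inv g) g0 :: map word_prod (words Q (S (N + N))))); auto.
      intros y Hy; simpl; auto.
  -
    intros T [HT1 HT2]. split.
    + intros y [x [Hx ->]]. split; [apply HT1; auto|]. exists (snd x). auto.
    + intros y [[L g] [Hx ->]]. destruct (HT2 _ Hx) as [F HF]. simpl in HF.
      destruct (bound_words Q HG F) as [NF HNF]. destruct (HG g) as [w0 [Hw0 Eg]].
      assert (HL : Z L) by (apply (HT1 _ Hx)).
      exists L, (max NF (length w0)), g. split; [auto|split; [|split]].
      * exists w0. repeat split; auto; lia.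
      * split; [auto|split; [auto|apply ball_iso_refl]].
      * intros [L' c] [HL' [Ec Hbi]]. simpl in *. exists (L', g). split.
        -- apply HF; auto. intros f Hf. destruct (HNF f Hf) as [w [Hw [Hn ->]]].
           symmetry. apply (ball_iso_mem Q (max NF (length w0))); auto. lia.
        -- unfold qmap; simpl. rewrite Ec. auto.
  - intros [L c] [HL [g Ec]]. exists (L, g). split; [auto|]. unfold qmap; simpl in *. rewrite Ec. auto.
  - split; [|split].
    + intros x Hx. split; [auto|]. exists (snd x). auto.
    + intros x Hx. split; [auto|]. exists (snd x). auto.
    + intros [L g] [L2 h] _ _ Hc. unfold composableZG, sZG in Hc. simpl in Hc. subst L2.
      exists L, g, h. unfold qmap, prodZG; simpl. auto.
Qed.
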